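(* Let $T:\mathcal{M}_d\to\mathcal{M}_d$ be a doubly stochastic, primitive quantum channel. Then the function $k\mapsto\alpha_2((T^* )^kT^k-\text{id}_d)$, $k\in\mathbb{N}$, is monotone increasing (non-decreasing).
   Context: Doubly stochastic channel: completely positive, trace preserving, $T(\mathbb{1})=T^*(\mathbb{1})=\mathbb{1}$ ($T^*$ the Hilbert–Schmidt adjoint). Primitive: $T^k(\rho)\to\mathbb{1}_d/d$ for all states. For a Liouvillian $\mathcal{L}$ on $\mathcal{M}_d$ with $\mathcal{L}(\mathbb{1})=0$: $\alpha_2(\mathcal{L})=\inf_{X>0}\mathcal{E}^2_{\mathcal{L}}(X)/\text{Ent}_2(X)$ over positive definite $X$, with $\mathcal{E}^2_{\mathcal{L}}(X)=-\frac1d\text{tr}[\mathcal{L}(X)X]$ and $\text{Ent}_2(X)=\frac1{2d}\text{tr}[X^2(\log\frac{X^2}{\text{tr}(X^2)}+\log d)]$. *)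

(* Defs.v *)
From HB Require Import structures.
From mathcomp Require Import all_boot all_order all_algebra.
From mathcomp Require Import sesquilinear spectral.
From mathcomp Require Import complex.
From mathcomp Require Import classical_sets reals exp.
Set Implicit Arguments. Unset Strict Implicit. Unset Printing Implicit Defensive.
Import Order.TTheory GRing.Theory Num.Theory Num.Def.
Local Open Scope ring_scope.
Local Open Scope classical_set_scope.

Section QChannels.
Variable R : realType.
Local Notation C := (R[i]).

Definition adjmx m n (A : 'M[C]_(m, n)) : 'M[C]_(n, m) := (map_mx conjC A)^T.

Definition psdmx n (A : 'M[C]_n) : Prop :=
  adjmx A = A /\ forall v : 'rV[C]_n, 0 <= (v *m A *m adjmx v) 0 0.
Definition pdmx n (A : 'M[C]_n) : Prop :=
  adjmx A = A /\ forall v : 'rV[C]_n, v != 0 -> 0 < (v *m A *m adjmx v) 0 0.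

(* complete positivity: id_n (x) T maps PSD block matrices to PSD block matrices,
   for every n *)
Definition completely_positive d (T : 'M[C]_d -> 'M[C]_d) : Prop :=
  forall (n : nat) (B : 'I_n -> 'I_n -> 'M[C]_d),
    psdmx (\mxblock_(i < n, j < n) B i j) ->
    psdmx (\mxblock_(i < n, j < n) T (B i j)).

Definition trace_preserving d (T : 'M[C]_d -> 'M[C]_d) : Prop :=
  forall X, \tr (T X) = \tr X.

(* Hilbert-Schmidt adjoint: tr(A^* T(B)) = tr((T^* A)^* B);
   explicitly (T^* A)_{ij} = tr(T(E_ij)^* A). *)
Definition hs_adjoint d (T : 'M[C]_d -> 'M[C]_d) : 'M[C]_d -> 'M[C]_d :=
  fun A => \matrix_(i, j) \tr (adjmx (T (delta_mx i j)) *m A).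

Definition doubly_stochastic d (T : {linear 'M[C]_d -> 'M[C]_d}) : Prop :=
  [/\ completely_positive T, trace_preserving T,
      T 1%:M = 1%:M & hs_adjoint T 1%:M = 1%:M].

Definition density d (rho : 'M[C]_d) : Prop := psdmx rho /\ \tr rho = 1.

Definition mx_cvg d (u : nat -> 'M[C]_d) (L : 'M[C]_d) : Prop :=
  forall eps : C, 0 < eps -> exists N : nat, forall k, (N <= k)%N ->
    forall i j, `|u k i j - L i j| < eps.

Definition primitive d (T : 'M[C]_d -> 'M[C]_d) : Prop :=
  forall rho, density rho -> mx_cvg (fun k => iter k T rho) ((d%:R)^-1 *: 1%:M).

(* functional calculus for Hermitian matrices via the spectral decomposition
   A = P^-1 diag(sp) P (P unitary) *)
Definition mxfun n (f : R -> R) (A : 'M[C]_n) : 'M[C]_n :=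
  invmx (spectralmx A) *m
  diag_mx (map_mx (fun z : C => (f (complex.Re z))%:C%C) (spectral_diag A)) *m
  spectralmx A.
Definition mxlog n (A : 'M[C]_n) := mxfun (@ln R) A.

(* Dirichlet form and 2-entropy (real valued; both are real for Hermitian X) *)
Definition dirichlet2 d (L : 'M[C]_d -> 'M[C]_d) (X : 'M[C]_d) : R :=
  - (d%:R)^-1 * complex.Re (\tr (L X *m X)).

Definition ent2 d (X : 'M[C]_d) : R :=
  let X2 := X *m X in
  (2 * d%:R)^-1 * complex.Re (\tr (X2 *m
     (mxlog ((\tr X2)^-1 *: X2) + (ln (d%:R : R))%:C%C *: 1%:M))).

(* log-Sobolev constant alpha_2: infimum over positive definite X
   (with Ent_2(X) > 0, i.e. where the quotient is defined) *)
Definition alpha2 d (L : 'M[C]_d -> 'M[C]_d) : R :=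
  inf [set dirichlet2 L X / ent2 X | X in [set X : 'M[C]_d | pdmx X /\ 0 < ent2 X]].

End QChannels.

(* Main.v *)
Require Import Defs.
From HB Require Import structures.
From mathcomp Require Import all_boot all_order all_algebra.
From mathcomp Require Import sesquilinear spectral complex.
From mathcomp Require Import classical_sets reals exp.
Import Order.TTheory GRing.Theory Num.Theory Num.Def.
Local Open Scope ring_scope.
From mathcomp Require Import boolp.
Section A.
Variable R : realType.
Local Notation C := (R[i]).
Lemma adjmxM m n p (A : 'M[C]_(m,n)) (B : 'M[C]_(n,p)) :
  adjmx (A *m B) = adjmx B *m adjmx A.
Proof. by rewrite /adjmx map_mxM trmx_mul. Qed.
Lemma adjmxK m n (A : 'M[C]_(m,n)) : adjmx (adjmx A) = A.
Proof. by apply/matrixP => i j; rewrite !mxE conjCK. Qed.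
Lemma adjmxD m n (A B : 'M[C]_(m,n)) : adjmx (A + B) = adjmx A + adjmx B.
Proof. by apply/matrixP => i j; rewrite !mxE rmorphD. Qed.
Lemma adjmxN m n (A : 'M[C]_(m,n)) : adjmx (- A) = - adjmx A.
Proof. by apply/matrixP => i j; rewrite !mxE rmorphN. Qed.
Lemma adjmxZ m n a (A : 'M[C]_(m,n)) : adjmx (a *: A) = a^* *: adjmx A.
Proof. by apply/matrixP => i j; rewrite !mxE rmorphM. Qed.
Lemma adjmx_sum m n (I : finType) (F : I -> 'M[C]_(m,n)) :
  adjmx (\sum_i F i) = \sum_i adjmx (F i).
Proof. by apply/matrixP => i j; rewrite !mxE !summxE rmorph_sum; apply: eq_bigr => k _; rewrite !mxE. Qed.
Lemma adjmx1 n : adjmx (1%:M : 'M[C]_n) = 1%:M.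
Proof. by apply/matrixP => i j; rewrite !mxE eq_sym; case: eqP; rewrite ?conjC1 ?conjC0. Qed.
Lemma adjmxE m n (A : 'M[C]_(m,n)) i j : adjmx A i j = (A j i)^*.
Proof. by rewrite !mxE. Qed.
End A.
Section B.
Variable R : realType.
Local Notation C := (R[i]).
Variable d : nat.
Variable T : {linear 'M[C]_d -> 'M[C]_d}.

Lemma tr_hs (A Z : 'M[C]_d) :
  \tr (hs_adjoint T A *m Z) = \tr (adjmx (T (adjmx Z)) *m A).
Proof.
have -> : adjmx Z = \sum_i \sum_j (Z j i)^* *: delta_mx i j.
  rewrite {1}(matrix_sum_delta (adjmx Z)); apply: eq_bigr => i _.
  by apply: eq_bigr => j _; rewrite adjmxE.
rewrite linear_sum adjmx_sum mulmx_suml raddf_sum /=.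
rewrite {1}/mxtrace; apply: eq_bigr => i _.
rewrite linear_sum adjmx_sum mulmx_suml raddf_sum /=.
rewrite !mxE; apply: eq_bigr => j _.
rewrite linearZ adjmxZ conjCK -scalemxAl mxtraceZ !mxE mulrC.
by [].
Qed.

Lemma tr_hs_iter k (A Z : 'M[C]_d) :
  \tr (iter k (hs_adjoint T) A *m Z) = \tr (adjmx (iter k T (adjmx Z)) *m A).
Proof.
elim: k A Z => [|k IH] A Z /=; first by rewrite adjmxK mxtrace_mulC.
by rewrite tr_hs mxtrace_mulC IH adjmxK -iterSr.
Qed.
End B.
Section C3.
Variable R : realType.
Local Notation C := (R[i]).

Lemma psd_adjM m n (N : 'M[C]_(m, n)) : psdmx (adjmx N *m N).
Proof.
split; first by rewrite adjmxM adjmxK.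
move=> v; have -> : v *m (adjmx N *m N) *m adjmx v =
   (v *m adjmx N) *m adjmx (v *m adjmx N) by rewrite adjmxM adjmxK !mulmxA.
rewrite mxE; apply: sumr_ge0 => k _; rewrite adjmxE; exact: mul_conjC_ge0.
Qed.

Lemma adj_mxblock p (p_ : 'I_p -> nat) (F : forall i j, 'M[C]_(p_ i, p_ j)) :
  adjmx (\mxblock_(i, j) F i j) = \mxblock_(i, j) adjmx (F j i).
Proof. by apply/matrixP => i j; rewrite !mxE. Qed.

Lemma adj_mxrow p (p_ : 'I_p -> nat) m (F : forall i, 'M[C]_(m, p_ i)) :
  adjmx (\mxrow_i F i) = \mxcol_i adjmx (F i).
Proof. by apply/matrixP => i j; rewrite !mxE. Qed.

Lemma delta_quad n (N : 'M[C]_n) (a : 'I_n) :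
  ((delta_mx 0 a : 'rV[C]_n) *m N *m adjmx (delta_mx 0 a : 'rV[C]_n)) 0 0 = N a a.
Proof.
rewrite -rowE mxE (bigD1 a) //= big1 ?addr0.
  by rewrite !mxE !eqxx mulr1n conjC1 mulr1.
by move=> k /negbTE nk; rewrite !mxE nk mulr0n conjC0 mulr0.
Qed.
End C3.
Section D.
Variable R : realType.
Local Notation C := (R[i]).
Variable d : nat.
Variable T : {linear 'M[C]_d -> 'M[C]_d}.
Hypothesis Tcp : completely_positive T.
Hypothesis Ttp : trace_preserving T.
Hypothesis T1 : T 1%:M = 1%:M.

Lemma contract (Y : 'M[C]_d) :
  complex.Re (\tr (adjmx (T Y) *m T Y)) <= complex.Re (\tr (adjmx Y *m Y)).
Proof.
pose Rf := fun i : 'I_2 => if val i == 0%N then (1%:M : 'M[C]_d) else Y.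
pose B := fun i j : 'I_2 => adjmx (Rf i) *m Rf j.
have Hsrc : psdmx (\mxblock_(i < 2, j < 2) B i j).
  rewrite /B -mul_mxcol_mxrow -adj_mxrow; exact: psd_adjM.
have [Hh Hq] := Tcp _ _ Hsrc.
set i0 : 'I_2 := ord0.
set i1 : 'I_2 := lift ord0 ord0.
have Hadj : adjmx (T Y) = T (adjmx Y).
  have := congr1 (fun M => @submxblock _ 2 2 (fun _ => d) (fun _ => d) M i1 i0) Hh.
  rewrite adj_mxblock /= !mxblockK /B /Rf /= adjmx1 mul1mx mulmx1.
  by [].
have Hx : forall x : 'rV[C]_d,
    0 <= (x *m (T (adjmx Y *m Y) - adjmx (T Y) *m T Y) *m adjmx x) 0 0.
  move=> x.
  pose u := - (x *m adjmx (T Y)).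
  pose W := fun i : 'I_2 => if val i == 0%N then u else x.
  have := Hq (\mxrow_i W i).
  rewrite mul_mxrow_mxblock adj_mxrow mul_mxrow_mxcol.
  rewrite !big_ord_recl !big_ord0 /= /W /B /Rf /= !addr0.
  rewrite adjmx1 !mul1mx !mulmx1 T1 -Hadj.
  rewrite mulmx1 /u addNr mul0mx add0r mulNmx mulmxBr mulmxBl !mulmxA.
  by rewrite mulmxDl mulNmx addrC.
have Htr : 0 <= \tr (T (adjmx Y *m Y) - adjmx (T Y) *m T Y).
  rewrite /mxtrace; apply: sumr_ge0 => a _; rewrite -delta_quad; exact: Hx.
move: Htr; rewrite raddfB /= Ttp subr_ge0 lecE => /andP [_ ->] //.
Qed.
End D.
Lemma ReB (R : realType) (x y : R[i]) : complex.Re (x - y) = complex.Re x - complex.Re y.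
Proof. by case: x => a b; case: y => c e. Qed.

Section E.
Variable R : realType.
Local Notation C := (R[i]).
Variable d : nat.
Variable T : {linear 'M[C]_d -> 'M[C]_d}.
Hypothesis Tcp : completely_positive T.
Hypothesis Ttp : trace_preserving T.
Hypothesis T1 : T 1%:M = 1%:M.

Let Nf (Y : 'M[C]_d) := complex.Re (\tr (adjmx Y *m Y)).

Lemma iter_contract k Y : Nf (iter k T Y) <= Nf Y.
Proof.
elim: k => [|k IH] //=; apply: le_trans IH; exact: contract.
Qed.

Lemma iter_mono k l X : (k <= l)%N -> Nf (iter l T X) <= Nf (iter k T X).
Proof. by move=> kl; rewrite -(subnK kl) iterD; apply: iter_contract. Qed.

Lemma dir_eq k (X : 'M[C]_d) : adjmx X = X ->
  dirichlet2 (fun X => iter k (hs_adjoint T) (iter k T X) - X) X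
  = (d%:R)^-1 * (Nf X - Nf (iter k T X)).
Proof.
move=> hX; rewrite /dirichlet2 mulmxBl raddfB /= ReB tr_hs_iter hX /Nf hX.
by rewrite mulNr -mulrN opprB.
Qed.
End E.
Theorem mainTheorem12 (R : realType) (d : nat) (hd : (0 < d)%N)
  (T : {linear 'M[R[i]]_d -> 'M[R[i]]_d}) :
  doubly_stochastic T -> primitive T ->
  forall k l : nat, (k <= l)%N ->
    alpha2 (fun X => iter k (hs_adjoint T) (iter k T X) - X)
    <= alpha2 (fun X => iter l (hs_adjoint T) (iter l T X) - X).
Proof.
move=> [Tcp Ttp T1 _] _ k l kl.
rewrite /alpha2.
set S := [set X : 'M[R[i]]_d | pdmx X /\ 0 < ent2 X]%classic.
have dinv : 0 <= (d%:R : R)^-1 by rewrite invr_ge0 ler0n.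
have f_ge0 : forall m X, S X ->
    0 <= dirichlet2 (fun X => iter m (hs_adjoint T) (iter m T X) - X) X / ent2 X.
  move=> m X [[hX _] he]; rewrite (dir_eq _ _ T _ _ hX) /= divr_ge0 ?(ltW he) //.
  by rewrite mulr_ge0 // subr_ge0 (iter_contract _ _ _ Tcp Ttp T1).
have fkl : forall X, S X ->
    dirichlet2 (fun X => iter k (hs_adjoint T) (iter k T X) - X) X / ent2 X <=
    dirichlet2 (fun X => iter l (hs_adjoint T) (iter l T X) - X) X / ent2 X.
  move=> X [[hX _] he]; rewrite !(dir_eq _ _ T _ _ hX) /=.
  apply: ler_wpM2r; first by rewrite invr_ge0 ltW.
  apply: ler_wpM2l => //; rewrite lerD2l lerN2; exact: (iter_mono _ _ _ Tcp Ttp T1).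
case: (pselect (exists X, S X)) => [[X SX]|nS].
  apply: lb_le_inf; first by eexists; exists X.
  move=> _ [Y SY <-]; apply: le_trans (fkl Y SY).
  apply: ge_inf; last by exists Y.
  by exists 0 => _ [Z SZ <-]; apply: f_ge0.
have S0 : S = set0 by apply/seteqP; split => // X SX; exfalso; apply: nS; exists X.
by rewrite S0 !image_set0 inf0.
Qed.
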